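(* Let $r,s$ be real numbers with $s > 3\sqrt{3}\, r > 0$, and let $C_{r,s} \subset \mathbb{P}^2$ be the nonsingular projective cubic $s(xyz - r^2 z^3) = x^2 y + x y^2$, with the group law on its real points in which the identity is $[1,-1,0]$ and $P+Q$ is the reflection in the line $y=x$ of the third intersection point of $C_{r,s}$ with the line through $P$ and $Q$ (tangent line if $P=Q$). Then no affine point $(x,y)$ of $C_{r,s}$ with $x>0$ and $y>0$ has finite odd order in this group.
   Context: Points $(x,y)$ on $C_{r,s}$ with $x>0,y>0$ are called triangle points. *)

(* Defs.v *)
From Stdlib Require Import Reals Lra.
Open Scope R_scope.

(* Points of the projective plane are represented by nonzero triples in R^3. *)
Definition pt : Type := (R * R * R)%type.

Definition px (P : pt) : R := fst (fst P).
Definition py (P : pt) : R := snd (fst P).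
Definition pz (P : pt) : R := snd P.

Definition nonzero (P : pt) : Prop := ~ (px P = 0 /\ py P = 0 /\ pz P = 0).

Definition proj_eq (P Q : pt) : Prop :=
  nonzero P /\ exists t : R, t <> 0 /\ Q = (t * px P, t * py P, t * pz P).

Definition F (r s : R) (P : pt) : R :=
  let x := px P in let y := py P in let z := pz P in
  s * (x * y * z - r ^ 2 * z ^ 3) - (x ^ 2 * y + x * y ^ 2).

Definition on_curve (r s : R) (P : pt) : Prop := nonzero P /\ F r s P = 0.

Definition lin2 (a : R) (A : pt) (b : R) (B : pt) : pt :=
  (a * px A + b * px B, a * py A + b * py B, a * pz A + b * pz B).

(* A and B are linearly independent in R^3 (cross product nonzero) *)
Definition indep (A B : pt) : Prop :=
  nonzero (py A * pz B - pz A * py B,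
           pz A * px B - px A * pz B,
           px A * py B - py A * px B).

(* P + Q + R is the intersection divisor of C_{r,s} with a line:
   the line spanned by A, B contains P, Q, R, and the restriction of the cubic
   form to the line factors as the product of the linear forms vanishing at
   P, Q, R (counted with multiplicity).  Thus R is the third intersection point
   of C with the line through P and Q (the tangent line if P = Q). *)
Definition third_point (r s : R) (P Q Rr : pt) : Prop :=
  on_curve r s P /\ on_curve r s Q /\ on_curve r s Rr /\
  exists (A B : pt) (a1 b1 a2 b2 a3 b3 k : R),
    indep A B /\ k <> 0 /\
    P = lin2 a1 A b1 B /\ Q = lin2 a2 A b2 B /\ Rr = lin2 a3 A b3 B /\
    forall l m : R,
      F r s (lin2 l A m B) =
        k * (b1 * l - a1 * m) * (b2 * l - a2 * m) * (b3 * l - a3 * m).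

Definition swap (P : pt) : pt := (py P, px P, pz P).

Definition sum_rel (r s : R) (P Q S : pt) : Prop :=
  exists Rr, third_point r s P Q Rr /\ proj_eq (swap Rr) S.

Definition origin : pt := (1, -1, 0).

Inductive mult (r s : R) : nat -> pt -> pt -> Prop :=
| mult_one : forall P, on_curve r s P -> mult r s 1 P P
| mult_succ : forall n P T U, mult r s n P T -> sum_rel r s T P U ->
    mult r s (S n) P U.

Definition is_mult_zero (r s : R) (n : nat) (P : pt) : Prop :=
  exists S, mult r s n P S /\ proj_eq origin S.

Definition has_order (r s : R) (P : pt) (n : nat) : Prop :=
  (0 < n)%nat /\ is_mult_zero r s n P /\
  forall m : nat, (0 < m < n)%nat -> ~ is_mult_zero r s m P.

(* Main.v *)
Require Import Defs.
From Stdlib Require Import Reals Lra Psatz.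
Open Scope R_scope.

Definition qf (s : R) (P : pt) : R := (px P + py P) * (px P + py P - s * pz P).
Lemma key r s T P Rr : 0 < s -> third_point r s T P Rr -> 0 <= qf s T * qf s P * qf s Rr.
Proof.
  intros Hs [_ [_ [_ [A [B [a1 [b1 [a2 [b2 [a3 [b3 [k [_ [Hk [HT [HP [HR HF]]]]]]]]]]]]]]]]].
  subst T P Rr.
  destruct A as [[A1 A2] A3]; destruct B as [[B1 B2] B3].
  set (al := A1 + A2). set (be := B1 + B2).
  set (ga := al - s * A3). set (de := be - s * B3).
  set (w := be * A3 - al * B3).
  set (D := (be * A1 - al * B1)^2 + r^2 * w^2).
  pose proof (HF be (-al)) as HX. pose proof (HF de (-ga)) as HY.
  assert (E1 : F r s (lin2 be (A1,A2,A3) (-al) (B1,B2,B3)) = - s * w * D).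
  { unfold F, lin2, px, py, pz, D, w, al, be; simpl; ring. }
  assert (E2 : F r s (lin2 de (A1,A2,A3) (-ga) (B1,B2,B3)) = - s * r^2 * w^3).
  { unfold F, lin2, px, py, pz, w, ga, de, al, be; simpl; ring. }
  rewrite E1 in HX. rewrite E2 in HY.
  assert (Hq : qf s (lin2 a1 (A1,A2,A3) b1 (B1,B2,B3)) * qf s (lin2 a2 (A1,A2,A3) b2 (B1,B2,B3)) *
     qf s (lin2 a3 (A1,A2,A3) b3 (B1,B2,B3)) =
     ((b1 * be - a1 * - al) * (b2 * be - a2 * - al) * (b3 * be - a3 * - al)) *
     ((b1 * de - a1 * - ga) * (b2 * de - a2 * - ga) * (b3 * de - a3 * - ga))).
  { unfold qf, lin2, px, py, pz, ga, de, al, be; simpl; ring. }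
  rewrite Hq.
  set (U := (b1 * be - a1 * - al) * (b2 * be - a2 * - al) * (b3 * be - a3 * - al)) in *.
  set (V := (b1 * de - a1 * - ga) * (b2 * de - a2 * - ga) * (b3 * de - a3 * - ga)) in *.
  assert (HX' : k * U = - s * w * D) by (rewrite HX; unfold U; ring).
  assert (HY' : k * V = - s * r^2 * w^3) by (rewrite HY; unfold V; ring).
  assert (Hp : (k*k) * (U * V) = s^2 * r^2 * D * (w^2)^2).
  { replace ((k*k)*(U*V)) with ((k*U)*(k*V)) by ring. rewrite HX', HY'. ring. }
  assert (HD : 0 <= D) by (unfold D; apply Rplus_le_le_0_compat; [apply pow2_ge_0| apply Rmult_le_pos; apply pow2_ge_0]).
  assert (Hkk : 0 < k*k) by (destruct (Rlt_or_le 0 k); [nra|]; destruct (Rle_lt_or_eq_dec _ _ H); [nra|congruence]).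
  assert (0 <= s^2 * r^2 * D * (w^2)^2).
  { apply Rmult_le_pos; [apply Rmult_le_pos; [apply Rmult_le_pos; apply pow2_ge_0 | exact HD] | apply pow2_ge_0]. }
  destruct (Rle_or_lt 0 (U*V)) as [|Hn]; [assumption|].
  assert (k*k*(U*V) < 0) by (nra).
  lra.
Qed.
Lemma E2 r s S : 0 < s -> 0 < r -> on_curve r s S -> qf s S = 0 -> proj_eq origin S.
Proof.
  intros Hs Hr [Hnz HF] Hq.
  destruct S as [[x y] z]. unfold qf, px, py, pz in *; cbn [fst snd] in *.
  unfold F, px, py, pz in HF; cbn [fst snd] in HF.
  assert (Hz : z = 0 /\ y = - x).
  { destruct (Rmult_integral _ _ Hq) as [H1|H1].
    - assert (Hy : y = - x) by lra. subst y.
      assert (HF' : s * z * (x^2 + r^2 * z^2) = 0).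
      { transitivity (-(s*(x*(-x)*z - r^2*z^3) - (x^2*(-x)+x*(-x)^2))); [ring | rewrite HF; ring]. }
      destruct (Req_dec z 0) as [|Hz0]; [split; auto|].
      exfalso. assert (0 < r^2 * z^2) by (apply Rmult_lt_0_compat; nra).
      destruct (Rmult_integral _ _ HF') as [H2|H2]; [|nra].
      destruct (Rmult_integral _ _ H2); lra.
    - assert (Hy : x + y = s * z) by lra.
      assert (HF' : s * r^2 * z^3 = 0).
      { transitivity (-(s * (x * y * z - r ^ 2 * z ^ 3) - (x ^ 2 * y + x * y ^ 2))); [|rewrite HF; ring].
        replace (x^2*y + x*y^2) with (x*y*(x+y)) by ring. rewrite Hy. ring. }
      assert (z = 0).
      { destruct (Rmult_integral _ _ HF') as [H2|H2].
        - exfalso. assert (0 < s * r^2) by (apply Rmult_lt_0_compat; nra). lra.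
        - destruct (Req_dec z 0) as [|Hz0]; auto. exfalso; exact (pow_nonzero z 3 Hz0 H2). }
      split; auto. subst z. lra. }
  destruct Hz as [Hz Hy]. subst z y.
  split.
  - unfold nonzero, origin, px, py, pz; cbn [fst snd]. intros [h _]. unfold px in h; cbn [fst snd] in h. lra.
  - exists x. split.
    + intro Hx. apply Hnz. subst x. unfold px, py, pz; cbn [fst snd]. repeat split; lra.
    + unfold origin, px, py, pz; simpl. f_equal; [f_equal|]; ring.
Qed.
Lemma arith (s a b c d : R) : a * d = b * c -> 0 <= a * (a - s * b) * (c * (c - s * d)).
Proof.
  intro H.
  replace (a * (a - s * b) * (c * (c - s * d))) with ((c*(a - s*b))^2 + c*(a-s*b)*s*(b*c - a*d)) by ring.
  rewrite H. replace (b * c - b * c) with 0 by ring. rewrite Rmult_0_r, Rplus_0_r. apply pow2_ge_0.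
Qed.

Lemma E4 r s T P Rr : third_point r s T P Rr -> proj_eq origin Rr -> 0 <= qf s T * qf s P.
Proof.
  intros [_ [_ [_ [A [B [a1 [b1 [a2 [b2 [a3 [b3 [k [_ [Hk [HT [HP [HR HF]]]]]]]]]]]]]]]]] [_ [t [Ht Ho]]].
  subst T P Rr.
  destruct A as [[A1 A2] A3]; destruct B as [[B1 B2] B3].
  unfold lin2, origin, px, py, pz in Ho. cbn [fst snd] in Ho.
  injection Ho as H1 H2 H3.
  unfold qf, lin2, px, py, pz. cbn [fst snd].
  apply arith.
  set (X1 := a1 * A1 + b1 * B1) in *. set (X2 := a1 * A2 + b1 * B2). set (X3 := a1 * A3 + b1 * B3).
  set (Y1 := a2 * A1 + b2 * B1). set (Y2 := a2 * A2 + b2 * B2). set (Y3 := a2 * A3 + b2 * B3).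
  assert (Hdet : X1 * (Y2 * (a3*A3+b3*B3) - Y3 * (a3*A2+b3*B2)) - X2 * (Y1 * (a3*A3+b3*B3) - Y3 * (a3*A1+b3*B1))
     + X3 * (Y1 * (a3*A2+b3*B2) - Y2 * (a3*A1+b3*B1)) = 0) by (unfold X1,X2,X3,Y1,Y2,Y3; ring).
  rewrite H1, H2, H3 in Hdet.
  apply (Rmult_eq_reg_l t); [|exact Ht].
  transitivity (t * ((X1 + X2) * Y3)); [ring|].
  lra.
Qed.

Lemma qf_proj s R0 U : proj_eq (swap R0) U -> exists c, 0 < c /\ qf s U = c * qf s R0.
Proof.
  intros [_ [t [Ht HU]]]. subst U. exists (t*t). split; [nra|].
  destruct R0 as [[a b] c]. unfold qf, swap, px, py, pz; cbn [fst snd]. ring.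
Qed.

Lemma oncurve_proj r s R0 U : on_curve r s R0 -> proj_eq (swap R0) U -> on_curve r s U.
Proof.
  intros [Hnz HF] [_ [t [Ht HU]]]. subst U.
  destruct R0 as [[a b] c]. unfold on_curve, nonzero, F, swap, px, py, pz in *; cbn [fst snd] in *.
  split.
  - intros [h1 [h2 h3]]. apply Hnz.
    repeat split; [destruct (Rmult_integral _ _ h2)|destruct (Rmult_integral _ _ h1)|destruct (Rmult_integral _ _ h3)]; auto; contradiction.
  - transitivity (t^3 * (s * (a * b * c - r ^ 2 * c ^ 3) - (a ^ 2 * b + a * b ^ 2))); [ring|rewrite HF; ring].
Qed.

Lemma E1 r s x y : 0 < r -> 0 < s -> F r s (x, y, 1) = 0 -> 0 < x -> 0 < y -> qf s (x, y, 1) < 0.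
Proof.
  intros Hr Hs HF Hx Hy. unfold F, qf, px, py, pz in *; cbn [fst snd] in *.
  assert (Hxy : 0 < x * y) by nra.
  assert (Hsr : 0 < s * r^2) by (apply Rmult_lt_0_compat; nra).
  assert (E : x * y * (x + y) = s * (x * y) - s * r^2).
  { transitivity (x^2*y + x*y^2 + (s * (x * y * 1 - r ^ 2 * 1 ^ 3) - (x ^ 2 * y + x * y ^ 2))); [rewrite HF; ring| ring]. }
  assert (H : x * y * (x + y) < s * (x * y)) by lra.
  assert (x + y < s).
  { apply (Rmult_lt_reg_l (x*y)); [exact Hxy|]. lra. }
  nra.
Qed.

Lemma main_ind r s x y N : 0 < r -> 0 < s -> F r s (x, y, 1) = 0 -> 0 < x -> 0 < y ->
  (forall m : nat, (0 < m < N)%nat -> ~ is_mult_zero r s m (x, y, 1)) ->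
  forall k P S, mult r s k P S -> P = (x, y, 1) -> (k <= N)%nat ->
  (Nat.odd k = true -> qf s S < 0) /\ (Nat.odd k = false -> (k < N)%nat -> 0 < qf s S).
Proof.
  intros Hr Hs HF Hx Hy Hmin k P S Hm.
  induction Hm as [P0 HP0 | n P0 T U Hm IH Hsum]; intros HP Hk.
  - subst P0. split; [intros; apply (E1 r); auto | discriminate].
  - subst P0. destruct (IH eq_refl ltac:(lia)) as [IHo IHe].
    destruct Hsum as [R0 [Hth Hpr]].
    pose proof (key r s _ _ _ Hs Hth) as Hkey.
    destruct (qf_proj s _ _ Hpr) as [c [Hc Hqc]].
    pose proof (E1 r s x y Hr Hs HF Hx Hy) as HqP.
    rewrite Nat.odd_succ, <- Nat.negb_odd.
    destruct (Nat.odd n) eqn:Hn; simpl.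
    + split; [discriminate|]. intros _ HnN.
      specialize (IHo eq_refl).
      assert (HR : 0 <= qf s R0).
      { destruct (Rle_or_lt 0 (qf s R0)); auto.
        assert (0 < qf s T * qf s (x,y,1)) by nra. nra. }
      assert (HU : 0 <= qf s U) by nra.
      destruct (Rle_lt_or_eq_dec _ _ HU) as [|Heq]; auto.
      exfalso. apply (Hmin (S n)); [lia|].
      exists U. split; [econstructor; [exact Hm | exists R0; split; assumption] |].
      apply (E2 r s); auto.
      destruct Hth as [_ [_ [HRc _]]].
      exact (oncurve_proj r s _ _ HRc Hpr).
    + split; [|discriminate]. intros _.
      specialize (IHe eq_refl ltac:(lia)).
      assert (HR : qf s R0 <= 0).
      { destruct (Rle_or_lt (qf s R0) 0); auto.
        assert (qf s T * qf s (x,y,1) < 0) by nra. nra. }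
      destruct (Rle_lt_or_eq_dec _ _ HR) as [HRl|Heq]; [nra|].
      exfalso.
      assert (Ho : proj_eq origin R0).
      { destruct Hth as [_ [_ [HRc _]]]. apply (E2 r s); auto. }
      pose proof (E4 r s _ _ _ Hth Ho). nra.
Qed.

Theorem corollary3 (r s x y : R) :
  0 < 3 * sqrt 3 * r -> 3 * sqrt 3 * r < s ->
  F r s (x, y, 1) = 0 -> 0 < x -> 0 < y ->
  forall n : nat, has_order r s (x, y, 1) n -> Nat.odd n = false.
Proof.
  intros H1 H2 HF Hx Hy n [Hn [[S [Hm Ho]] Hmin]].
  assert (Hs3 : 0 < sqrt 3) by (apply sqrt_lt_R0; lra).
  assert (Hr : 0 < r).
  { destruct (Rle_or_lt r 0); auto. assert (0 < 3 * sqrt 3) by lra. nra. }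
  assert (Hs : 0 < s) by lra.
  destruct (main_ind r s x y n Hr Hs HF Hx Hy Hmin n _ S Hm eq_refl (le_n n)) as [Ho1 _].
  destruct (Nat.odd n); auto.
  exfalso. specialize (Ho1 eq_refl).
  destruct Ho as [_ [t [_ HS]]]. subst S.
  unfold qf, origin, px, py, pz in Ho1; cbn [fst snd] in Ho1. lra.
Qed.
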